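(* Let $I$ be a common interval of $\mathcal{P}$ with $|I|\geq 2$. Then $I$ is $b$-nested if and only if one of the following holds: (a) $I$ is a $P$-interval and there exists $x_h\in D(I)$ such that $Int(x_h)$ is a $b$-nested common interval of size at least $|I|-b$; (b) $I$ is a $Q$-interval such that all intervals $Int(x_i)$ with $x_i\in D(I)$ are $b$-small, with at most one exception, which is a $b$-large $b$-nested common interval.
   Context: Let $n\geq 1$, $K\geq 1$ and let $\mathcal{P}=\{P_1,\ldots,P_K\}$ be permutations of $\{1,\ldots,n\}$ with $P_1=(1,2,\ldots,n)$. For integers $i\leq j$ write $(i..j)=\{i,\ldots,j\}$. A common interval of $\mathcal{P}$ is a set of integers occupying consecutive positions in every $P_k$; all have the form $(i..j)$, and singletons and $(1..n)$ are common. Fix a positive integer $b$. A common interval $I$ is $b$-small if $|I|\leq b$, $b$-large otherwise; it is $b$-nested if $|I|=1$ or $I$ strictly contains a $b$-nested common interval $J$ with $|J|\geq|I|-b$ (recursive on size). Two intervals $(i..j)$, $(k..l)$ overlap if $i<k\leq j<l$ or $k<i\leq l<j$. A common interval is strong if it overlaps no other common interval. The PQ-tree $T$: nodes are the strong common intervals ($Int(x)$ is the interval of node $x$), root $(1..n)$, leaves the singletons, parent of $y$ is the node whose interval is the smallest strong common interval strictly containing $Int(y)$. A node $x$ with children set $D$ is a $P$-node if no union $\bigcup_{z\in D'}Int(z)$, $D'\subset D$, $2\leq|D'|<|D|$, is common; otherwise it is a $Q$-node with children ordered $y_1,\ldots,y_r$ so that $\max Int(y_i)+1=\min Int(y_{i+1})$.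 It is known that a set is a common interval iff it is $Int(x)$ for a node $x$ or the union of the intervals of consecutive children of a unique $Q$-node. The domain $D(I)$ of a common interval $I$ is the set of children of $x$ if $I=Int(x)$ is strong, and otherwise the set of consecutive children of the $Q$-node whose intervals have union $I$. A $P$-interval is a strong common interval $Int(x)$ with $x$ a $P$-node; all other common intervals are $Q$-intervals. *)

(* Defs.v *)
(* Permutations of {1..n} are sequences of nats;
   intervals (i..j) are pairs (i, j) of nats. *)
From mathcomp Require Import all_boot.
Set Implicit Arguments. Unset Strict Implicit. Unset Printing Implicit Defensive.

Definition interval := (nat * nat)%type.

(* the set of integers (i..j) = {i, ..., j} (empty if j < i) *)
Definition iset (I : interval) : seq nat := iota I.1 (I.2.+1 - I.1).
Definition isize (I : interval) : nat := I.2.+1 - I.1.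

(* a (nonempty) set S of integers occupies consecutive positions in every p of P *)
Definition is_common_set (P : seq (seq nat)) (S : seq nat) : bool :=
  (S != [::]) &&
  all (fun p => has (fun a => perm_eq (take (size (undup S)) (drop a p)) (undup S))
                    (iota 0 (size p))) P.

Definition common (P : seq (seq nat)) (I : interval) : bool := is_common_set P (iset I).

Definition all_intervals (n : nat) : seq interval :=
  [seq (i, j) | i <- iota 1 n, j <- iota i (n.+1 - i)].

Definition overlap (I J : interval) : bool :=
  ((I.1 < J.1) && (J.1 <= I.2) && (I.2 < J.2)) ||
  ((J.1 < I.1) && (I.1 <= J.2) && (J.2 < I.2)).

Definition strong (n : nat) (P : seq (seq nat)) (I : interval) : bool :=
  common P I && all (fun J => ~~ (common P J && overlap I J)) (all_intervals n).

Definition isubset (J I : interval) : bool := (I.1 <= J.1) && (J.2 <= I.2).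
Definition iproper (J I : interval) : bool := isubset J I && (J != I).

(* y is a child of x in the PQ-tree: Int(x) is the smallest strong common
   interval strictly containing Int(y) *)
Definition child (n : nat) (P : seq (seq nat)) (y x : interval) : bool :=
  [&& strong n P x, strong n P y, iproper y x &
   all (fun z => (strong n P z && iproper y z) ==> isubset x z) (all_intervals n)].

Definition children (n : nat) (P : seq (seq nat)) (x : interval) : seq interval :=
  [seq y <- all_intervals n | child n P y x].

Definition union_set (D : seq interval) : seq nat := flatten (map iset D).

Definition Pnode (n : nat) (P : seq (seq nat)) (x : interval) : Prop :=
  strong n P x /\
  forall D' : seq interval, subseq D' (children n P x) ->
    2 <= size D' < size (children n P x) -> ~~ is_common_set P (union_set D').

Definition Qnode (n : nat) (P : seq (seq nat)) (x : interval) : Prop :=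
  strong n P x /\ ~ Pnode n P x.

Definition P_interval (n : nat) (P : seq (seq nat)) (I : interval) : Prop := Pnode n P I.
Definition Q_interval (n : nat) (P : seq (seq nat)) (I : interval) : Prop :=
  common P I /\ ~ P_interval n P I.

Definition inD (n : nat) (P : seq (seq nat)) (I y : interval) : Prop :=
  if strong n P I then is_true (child n P y I)
  else exists x, [/\ Qnode n P x, child n P y x, isubset y I &
                     union_set [seq z <- children n P x | isubset z I] =i iset I].

Inductive bnested (P : seq (seq nat)) (b : nat) : interval -> Prop :=
| bnested_single I : common P I -> isize I = 1 -> bnested P b I
| bnested_step I J : common P I -> common P J -> iproper J I ->
    isize I <= isize J + b -> bnested P b J -> bnested P b I.

Definition bsmall (b : nat) (I : interval) : bool := isize I <= b.

(* Main.v *)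
Require Import Defs.
From mathcomp Require Import all_boot zify.
From Stdlib Require Import Classical_Prop.
Set Implicit Arguments. Unset Strict Implicit.

Lemma mem_iset x (I : interval) : (x \in iset I) = (I.1 <= x <= I.2).
Proof. rewrite /iset mem_iota. apply/idP/idP; lia. Qed.

Definition conv (p : seq nat) (S : nat -> bool) : Prop :=
  (forall x, S x -> x \in p) /\
  (forall u v w, S u -> S v -> w \in p -> index u p <= index w p <= index v p -> S w).

Lemma conv_ext p (S S' : nat -> bool) : S =1 S' -> conv p S -> conv p S'.
Proof.
move=> E [h1 h2]; split=> [x|u v w]; rewrite -!E; [exact: h1| exact: h2].
Qed.

Lemma memW (s1 W s2 : seq nat) x : uniq (s1 ++ W ++ s2) ->
  (x \in W) = (x \in s1 ++ W ++ s2) &&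
              (size s1 <= index x (s1 ++ W ++ s2) < size s1 + size W).
Proof.
rewrite !cat_uniq => /and3P[_ hn /andP[_ /andP[hn2 _]]].
rewrite index_cat !mem_cat; case: ifP => xs1.
  have ->: (x \in W) = false.
    apply/negP=> xW; case/negP: hn; apply/hasP; exists x; rewrite ?mem_cat ?xW //.
  have hi : index x s1 < size s1 by rewrite index_mem.
  rewrite /=; apply/esym/negbTE; apply/negP=> /andP[h _]; lia.
rewrite /= index_cat; case: ifP => xW.
  have hi : index x W < size W by rewrite index_mem.
  rewrite /=; apply/esym/andP; split; lia.
rewrite /=; apply/esym/negbTE; apply/negP=> /andP[_ /andP[_ h]]; lia.
Qed.

Lemma win_conv p X : uniq p ->
  has (fun a => perm_eq (take (size (undup X)) (drop a p)) (undup X)) (iota 0 (size p)) ->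
  conv p (fun x => x \in X).
Proof.
move=> up /hasP[a _ hperm].
set k := size (undup X) in hperm.
set W := take k (drop a p) in hperm.
set s1 := take a p. set s2 := drop k (drop a p).
have E : p = s1 ++ W ++ s2 by rewrite /s1 /W /s2 !cat_take_drop.
have hX : forall x, (x \in X) = (x \in W) by move=> x; rewrite (perm_mem hperm) mem_undup.
have hW : forall x, (x \in W) = (x \in p) && (size s1 <= index x p < size s1 + size W).
  by move=> x; rewrite E; apply: memW; rewrite -E.
split=> [x|u v w]; rewrite ?hX ?hW.
  by case/andP.
case/andP=> _ /andP[h1 h2] /andP[_ /andP[h3 h4]] -> /andP[h5 h6] /=.
by rewrite (leq_trans h1 h5) (leq_ltn_trans h6 h4).
Qed.

Lemma conv_win p X : uniq p -> X != [::] -> conv p (fun x => x \in X) ->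
  has (fun a => perm_eq (take (size (undup X)) (drop a p)) (undup X)) (iota 0 (size p)).
Proof.
move=> up; case: X => [//|x0 X'] _; set X := x0 :: X' => [[hsub hconv]].
have x0X : x0 \in X by rewrite inE eqxx.
have hex : exists i, (i < size p) && (nth 0 p i \in X).
  exists (index x0 p); rewrite index_mem hsub //= nth_index ?hsub //.
have hub : forall i, (i < size p) && (nth 0 p i \in X) -> i <= size p.
  by move=> i /andP[/ltnW].
case: (ex_minnP hex) => a /andP[ha haX] amin.
case: (ex_maxnP hex hub) => M /andP[hM hMX] Mmax.
have hidx : forall x, x \in X -> a <= index x p <= M.
  move=> x xX; have hx := hsub _ xX.
  have hq : (index x p < size p) && (nth 0 p (index x p) \in X).
    by rewrite index_mem hx nth_index.
  by rewrite (amin _ hq) (Mmax _ hq).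
have aM : a <= M by move: (hidx _ haX); rewrite index_uniq // => /andP[].
set m := M.+1 - a.
set W := take m (drop a p).
set s1 := take a p. set s2 := drop m (drop a p).
have E : p = s1 ++ W ++ s2 by rewrite /s1 /W /s2 !cat_take_drop.
have hs1 : size s1 = a by rewrite /s1 size_take ha.
have hsW : size W = m by rewrite /W size_take size_drop; case: ifP; lia.
have hW : forall x, (x \in W) = (x \in p) && (size s1 <= index x p < size s1 + size W).
  by move=> x; rewrite E; apply: memW; rewrite -E.
have WX : W =i undup X.
  move=> x; rewrite mem_undup hW hs1 hsW; apply/idP/idP.
    case/andP=> xp hb; apply: (hconv (nth 0 p a) (nth 0 p M)) => //.
    rewrite !index_uniq //; lia.
  move=> xX; rewrite hsub //=; have := hidx _ xX; lia.
have hperm : perm_eq W (undup X).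
  apply: uniq_perm => //; last exact: undup_uniq.
  by rewrite /W take_uniq // drop_uniq.
apply/hasP; exists a; first by rewrite mem_iota; lia.
by rewrite -(perm_size hperm) hsW.
Qed.

Lemma conv_I p (SA SB S : nat -> bool) : conv p SA -> conv p SB ->
  (forall x, S x = SA x && SB x) -> conv p S.
Proof.
move=> [a1 a2] [b1 b2] E; split=> [x|u v w]; rewrite !E.
  by case/andP=> /a1.
move=> /andP[ha hb] /andP[ha' hb'] wp h.
by rewrite (a2 u v w) // (b2 u v w).
Qed.

Lemma conv_D p (SA SB S : nat -> bool) b0 : conv p SA -> conv p SB ->
  SB b0 -> ~~ SA b0 ->
  (forall x, S x = SA x && ~~ SB x) -> conv p S.
Proof.
move=> [a1 a2] [b1 b2] hb0 hab0 E; split=> [x|u v w]; rewrite !E.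
  by case/andP=> /a1.
move=> /andP[ha hb] /andP[ha' hb'] wp /andP[h1 h2].
have haw : SA w by apply: (a2 u v w) => //; rewrite h1 h2.
rewrite haw /=; apply/negP=> hbw.
have b0p := b1 _ hb0.
have up := a1 _ ha. have vp := a1 _ ha'.
case: (leqP (index b0 p) (index u p)) => c1.
  have hh : index b0 p <= index u p <= index w p by rewrite c1 h1.
  by case/negP: hb; apply: (b2 b0 w u).
case: (leqP (index v p) (index b0 p)) => c2.
  have hh : index w p <= index v p <= index b0 p by rewrite h2 c2.
  by case/negP: hb'; apply: (b2 w b0 v).
have hh : index u p <= index b0 p <= index v p by rewrite (ltnW c1) (ltnW c2).
by case/negP: hab0; apply: (a2 u v b0).
Qed.

Lemma conv_U p (SA SB S : nat -> bool) c : conv p SA -> conv p SB ->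
  SA c -> SB c ->
  (forall x, S x = SA x || SB x) -> conv p S.
Proof.
move=> [a1 a2] [b1 b2] hac hbc E; split=> [x|u v w]; rewrite !E.
  by case/orP=> [/a1|/b1].
move=> hu hv wp /andP[h1 h2].
have cp := a1 _ hac.
case: (leqP (index w p) (index c p)) => c1.
  have hh : index u p <= index w p <= index c p by rewrite h1 c1.
  case/orP: hu => hu.
    by rewrite (a2 u c w).
  by rewrite (b2 u c w) ?orbT.
have hh : index c p <= index w p <= index v p by rewrite h2 (ltnW c1).
case/orP: hv => hv.
  by rewrite (a2 c v w).
by rewrite (b2 c v w) ?orbT.
Qed.

Definition good n (P : seq (seq nat)) :=
  [/\ 1 <= n, P != [::], all (fun p => perm_eq p (iota 1 n)) P & head [::] P = iota 1 n].

Section G.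
Variables (n : nat) (P : seq (seq nat)).
Hypothesis hP : good n P.

Lemma good_perm p : p \in P -> perm_eq p (iota 1 n).
Proof. by case: hP => _ _ /allP h _ /h. Qed.

Lemma good_uniq p : p \in P -> uniq p.
Proof. by move/good_perm/perm_uniq => ->; apply: iota_uniq. Qed.

Lemma good_mem p x : p \in P -> (x \in p) = (1 <= x <= n).
Proof. move/good_perm/perm_mem => ->; rewrite mem_iota; apply/idP/idP; lia. Qed.

Lemma good_id : iota 1 n \in P.
Proof. by case: hP => _; case: P => [//|q Q] _ _ /= ->; rewrite inE eqxx. Qed.

Lemma cs_conv S : is_common_set P S <->
  (S != [::]) /\ (forall p, p \in P -> conv p (fun x => x \in S)).
Proof.
rewrite /is_common_set; split.
  case/andP=> ne /allP h; split=> // p pP; apply: win_conv; [exact: good_uniq| exact: h].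
case=> ne h; rewrite ne /=; apply/allP=> p pP; apply: conv_win => //; [exact: good_uniq| exact: h].
Qed.

Lemma cs_eqi S S' : S =i S' -> is_common_set P S = is_common_set P S'.
Proof.
move=> E.
have ne : (S != [::]) = (S' != [::]).
  case: S E => [|x s]; case: S' => [|y s'] // E.
    by have := E y; rewrite inE eqxx.
  by have := E x; rewrite inE eqxx.
apply/idP/idP => /cs_conv [h1 h2]; apply/cs_conv; split.
- by rewrite -ne.
- by move=> p pP; apply: conv_ext (h2 p pP) => x; rewrite E.
- by rewrite ne.
- by move=> p pP; apply: conv_ext (h2 p pP) => x; rewrite E.
Qed.

Lemma commonE I : common P I <->
  I.1 <= I.2 /\ (forall p, p \in P -> conv p (fun x => I.1 <= x <= I.2)).
Proof.
rewrite /common cs_conv.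
have -> : (iset I != [::]) = (I.1 <= I.2).
  by rewrite -size_eq0 size_iota; apply/idP/idP; lia.
split=> [] [h1 h2]; split=> // p pP; apply: conv_ext (h2 p pP) => x; by rewrite mem_iset.
Qed.

Lemma common_valid I : common P I -> [/\ 1 <= I.1, I.1 <= I.2 & I.2 <= n].
Proof.
case/commonE=> h /(_ _ good_id) [hs _].
have h1 : I.1 \in iota 1 n by apply: hs; apply/andP; split.
have h2 : I.2 \in iota 1 n by apply: hs; apply/andP; split.
rewrite !mem_iota in h1 h2; split; lia.
Qed.


Lemma idx_iota x : 1 <= x <= n -> index x (iota 1 n) = x.-1.
Proof.
case: x => [//|x] hx /=.
have -> : x.+1 = nth 0 (iota 1 n) x by rewrite nth_iota; lia.
rewrite index_uniq ?iota_uniq ?size_iota; lia.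
Qed.

Lemma common_set_int S : is_common_set P S -> exists I, S =i iset I.
Proof.
case/cs_conv=> ne /(_ _ good_id) [hs hc].
have hS : forall x, x \in S -> 1 <= x <= n.
  by move=> x /hs; rewrite mem_iota; lia.
case: S ne hs hc hS => [//|x0 S'] _; set S := x0 :: S' => hs hc hS.
have hex : exists x, x \in S by exists x0; rewrite inE eqxx.
have hub : forall x, x \in S -> x <= n by move=> x /hS; lia.
case: (ex_minnP hex) => m hm mmin.
case: (ex_maxnP hex hub) => M hM Mmax.
exists (m, M) => x; rewrite mem_iset /=; apply/idP/idP.
  by move=> xS; rewrite (mmin _ xS) (Mmax _ xS).
move=> hx; have := hS _ hm; have := hS _ hM => h1 h2.
apply: (hc m M x) => //; first by rewrite mem_iota; lia.
rewrite !idx_iota; lia.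
Qed.

Lemma common_ov (A B : interval) : common P A -> common P B ->
  A.1 < B.1 -> B.1 <= A.2 -> A.2 < B.2 ->
  [/\ common P (A.1, B.1.-1), common P (B.1, A.2), common P (A.2.+1, B.2)
    & common P (A.1, B.2)].
Proof.
move=> /commonE [ha hA] /commonE [hb hB] h1 h2 h3.
split; apply/commonE; split=> /=; try lia; move=> p pP;
  have cA := hA p pP; have cB := hB p pP.
- apply: (conv_D (b0 := B.2) cA cB); try (apply/idP/idP; lia).
  move=> x; apply/idP/idP; lia.
- apply: (conv_I cA cB) => x; apply/idP/idP; lia.
- apply: (conv_D (b0 := A.1) cB cA); try (apply/idP/idP; lia).
  move=> x; apply/idP/idP; lia.
- apply: (conv_U (c := B.1) cA cB); try (apply/idP/idP; lia).
  move=> x; apply/idP/idP; lia.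
Qed.

End G.
Set Implicit Arguments. Unset Strict Implicit.

Lemma iproperE (J I : interval) :
  iproper J I = [&& I.1 <= J.1, J.2 <= I.2 & (J.1 != I.1) || (J.2 != I.2)].
Proof. by case: J I => a b [c d]; rewrite /iproper /isubset xpair_eqE negb_and /= andbA. Qed.
Lemma pairE (J I : interval) : J.1 = I.1 -> J.2 = I.2 -> J = I.
Proof. by case: J I => a b [c d] /= -> ->. Qed.

Lemma mem_all n I : (I \in all_intervals n) = [&& 1 <= I.1, I.1 <= I.2 & I.2 <= n].
Proof.
case: I => i j /=; apply/allpairsPdep/idP.
  by case=> x [y [hx hy [-> ->]]]; move: hx hy; rewrite !mem_iota => ??; apply/and3P; split; lia.
move=> /and3P[h1 h2 h3]; exists i, j; rewrite !mem_iota; split=> //; apply/andP; split; lia.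
Qed.

Lemma uniq_all n : uniq (all_intervals n).
Proof.
apply: allpairs_uniq_dep; first exact: iota_uniq.
  by move=> x _; apply: iota_uniq.
by move=> [x y] [x' y'] _ _ /= [-> ->].
Qed.

Section T.
Variables (n : nat) (P : seq (seq nat)).
Hypothesis hP : good n P.

Notation common := (common P).
Notation strong := (strong n P).
Notation child := (child n P).

Lemma strong_common y : strong y -> common y.
Proof. by case/andP. Qed.

Lemma common_all I : common I -> I \in all_intervals n.
Proof. by move/(common_valid hP)=> [h1 h2 h3]; rewrite mem_all h1 h2 h3. Qed.

Lemma nov y J : strong y -> common J ->
  ~ ((y.1 < J.1) && (J.1 <= y.2) && (y.2 < J.2)) /\
  ~ ((J.1 < y.1) && (y.1 <= J.2) && (J.2 < y.2)).
Proof.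
case/andP=> _ /allP h cJ; have := h J (common_all cJ); rewrite cJ /= /overlap negb_or.
by case/andP=> /negP a /negP b.
Qed.

Lemma validI I : common I -> 1 <= I.1 /\ I.1 <= I.2 /\ I.2 <= n.
Proof. by case/(common_valid hP) => *; split. Qed.

Lemma single_strong e : 1 <= e <= n -> strong (e, e).
Proof.
move=> he; apply/andP; split.
  apply/(commonE hP); split=> //= p pP; split=> [x hx|u v w hu hv wp hi].
    rewrite (good_mem hP _ pP); lia.
  have eu : u = e by lia.
  have ev : v = e by lia.
  subst u v.
  have ep : e \in p by rewrite (good_mem hP _ pP).
  have : index w p = index e p by lia.
  by move/(congr1 (nth 0 p)); rewrite !nth_index // => ->; apply/andP.
apply/allP=> [[j1 j2]] _; rewrite negb_and /overlap /=; apply/orP; right; apply/negP; lia.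
Qed.

Lemma root_strong : strong (1, n).
Proof.
case: (hP) => hn _ _ _.
apply/andP; split.
  apply/(commonE hP); split=> //= p pP; split=> [x hx|u v w hu hv wp hi].
    by rewrite (good_mem hP _ pP).
  by rewrite -(good_mem hP _ pP).
apply/allP=> [[j1 j2]]; rewrite mem_all => /and3P[/= h1 h2 h3].
rewrite negb_and /overlap /=; apply/orP; right; apply/negP; lia.
Qed.

Lemma not_strong I : common I -> ~~ strong I ->
  exists K, common K /\ overlap I K.
Proof.
move=> cI; rewrite /Defs.strong cI /= => /allPn [K _]; rewrite negbK => /andP[cK].
by exists K.
Qed.

Lemma child_prop y x : child y x ->
  [/\ strong x, strong y, iproper y x &
      forall z, strong z -> iproper y z -> isubset x z].
Proof.
case/and4P=> sx sy pyx /allP h; split=> // z sz pyz.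
have := h z (common_all (strong_common sz)); by rewrite sz pyz.
Qed.

Lemma size_lt z w : z.1 <= z.2 -> iproper z w -> isize z < isize w.
Proof. rewrite iproperE /isize => h /and3P[a b c]; lia. Qed.

Definition Mx (x y : interval) :=
  [/\ strong y, iproper y x &
      forall w, strong w -> iproper y w -> iproper w x -> False].

Lemma maxstrong (x s : interval) : strong s -> isubset s x -> s != x ->
  x.2 <= n ->
  exists z, isubset s z /\ Mx x z.
Proof.
move=> ss hsx hne hxn.
pose Q m := has (fun z => [&& strong z, isubset s z, iproper z x & isize z == m])
                (all_intervals n).
have hex : exists m, Q m.
  exists (isize s); apply/hasP; exists s; rewrite ?common_all ?strong_common //.
  by rewrite ss /isubset !leqnn /= /iproper hsx hne eqxx.
have hub : forall m, Q m -> m <= n.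
  move=> m /hasP [[z1 z2] zin /and4P[_ _ pz /eqP <-]].
  move: zin pz; rewrite mem_all iproperE /isize /= => /and3P[a b c].
  by case/and3P => d e f; lia.
case: (ex_maxnP hex hub) => m /hasP[z zin /and4P[sz psz pzx /eqP ez]] mmax.
exists z; split=> //; split=> // w sw pzw pwx.
have vz := validI (strong_common sz).
have vw := validI (strong_common sw).
have : Q (isize w).
  apply/hasP; exists w; rewrite ?common_all ?strong_common // sw pwx eqxx /= andbT.
  by move: psz pzw; rewrite iproperE /isubset => /andP[a b] /and3P[c d _]; apply/andP; split; lia.
move/mmax; have := size_lt (proj1 (proj2 vz)) pzw; lia.
Qed.

Lemma child_of_max y x : strong x -> Mx x y -> child y x.
Proof.
move=> sx [sy pyx hmax]; apply/and4P; split=> //; apply/allP=> [[z1 z2]] _.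
set z : interval := (z1, z2).
apply/implyP=> /andP[sz pyz].
have [n1 n2] := nov sz (strong_common sx); have v1 := validI (strong_common sx).
have v2 := validI (strong_common sy); have v3 := validI (strong_common sz).
case: (boolP (isubset x z)) => // hn; exfalso.
apply: (hmax z sz pyz).
move: hn pyx pyz n1 n2 v3; rewrite !iproperE /isubset /= => hn /and3P[a b c] /and3P[d e f].
move=> n1 n2 v3; apply/and3P; split; lia.
Qed.

Lemma exists_child x s : strong x -> strong s -> iproper s x ->
  exists y, child y x /\ isubset s y.
Proof.
move=> sx ss /andP[h1 h2].
have [_ [_ hx]] := validI (strong_common sx).
case: (maxstrong ss h1 h2 hx) => z [hsz mz].
by exists z; split=> //; apply: child_of_max.
Qed.

Lemma child_point x e : strong x -> x.1 < x.2 -> x.1 <= e <= x.2 ->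
  exists y, child y x /\ y.1 <= e <= y.2.
Proof.
move=> sx hx he.
have [v1 [v2 v3]] := validI (strong_common sx).
have se : strong (e, e) by apply: single_strong; lia.
have : iproper (e, e) x by rewrite iproperE /=; apply/and3P; split; lia.
by case/(exists_child sx se) => y [cy hy]; exists y; split.
Qed.

Lemma children_disj y z x : child y x -> child z x ->
  y = z \/ y.2 < z.1 \/ z.2 < y.1.
Proof.
move=> cy cz.
case: (child_prop cy) => sx sy pyx hy.
case: (child_prop cz) => _ sz pzx hz.
have [n1 n2] := nov sy (strong_common sz).
have := validI (strong_common sy); have := validI (strong_common sz).
case: (boolP (iproper y z)) => pyz.
  by have := hy z sz pyz; move: pzx pyz; rewrite !iproperE /isubset => /and3P[a b c] /and3P[d e f] g; lia.
case: (boolP (iproper z y)) => pzy.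
  by have := hz y sy pzy; move: pyx pzy; rewrite !iproperE /isubset => /and3P[a b c] /and3P[d e f] g; lia.
move: pyz pzy; rewrite !iproperE => a b v1 v2.
case: (boolP ((y.1 == z.1) && (y.2 == z.2))) => [/andP[/eqP e1 /eqP e2]|ne].
  by left; apply: pairE.
right; lia.
Qed.

End T.
Set Implicit Arguments. Unset Strict Implicit.

Lemma mem_union D x : reflect (exists2 y, y \in D & x \in iset y) (x \in union_set D).
Proof. exact: flatten_mapP. Qed.

Lemma two_size (T : eqType) (s : seq T) a b : a \in s -> b \in s -> a != b -> 1 < size s.
Proof.
case: s => [//|x [|y t]] //=; rewrite !inE => /eqP -> /eqP ->; by rewrite eqxx.
Qed.

Lemma filter_lt (T : eqType) (p : pred T) s c : c \in s -> ~~ p c -> size (filter p s) < size s.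
Proof.
move=> cs pc; rewrite size_filter; have := count_predC p s.
have : 0 < count (predC p) s by rewrite -has_count; apply/hasP; exists c.
lia.
Qed.

Section C.
Variables (n : nat) (P : seq (seq nat)).
Hypothesis hP : good n P.

Notation common := (Defs.common P).
Notation strong := (Defs.strong n P).
Notation child := (Defs.child n P).

Lemma mem_children y x : (y \in children n P x) = child y x.
Proof.
rewrite mem_filter; case cy: (child y x) => //=.
by case: (child_prop hP cy) => _ sy _ _; apply: (common_all hP); exact: (strong_common sy).
Qed.

Lemma child_valid y x : child y x -> [/\ strong x, strong y, iproper y x &
   forall z, strong z -> iproper y z -> isubset x z] /\
   (1 <= y.1 /\ y.1 <= y.2 /\ y.2 <= n) /\ (1 <= x.1 /\ x.1 <= x.2 /\ x.2 <= n).
Proof.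
move=> cy; have := child_prop hP cy; case=> sx sy pyx h; split=> //.
by split; apply: (validI hP); [exact: (strong_common sy)|exact: (strong_common sx)].
Qed.

Lemma Pnode_sub x J : Pnode n P x -> common J -> iproper J x ->
  exists y, child y x /\ isubset J y.
Proof.
case=> sx hPn cJ pJx.
have [j1 [j2 j3]] := validI hP cJ.
have [x1 [x2 x3]] := validI hP (strong_common sx).
move: pJx; rewrite iproperE => /and3P[p1 p2 p3].
have hx : x.1 < x.2 by lia.
have [c1 [cc1 hc1]] : exists c, child c x /\ c.1 <= J.1 <= c.2.
  by apply: (child_point hP sx hx); apply/andP; split; lia.
case: (boolP (isubset J c1)) => hJ1; first by exists c1.
exfalso.
have [[_ sc1 pc1 _] [v1 _]] := child_valid cc1.
have [n1 n2] := nov hP sc1 cJ.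
move: hJ1; rewrite /isubset => hJ1.
have hc1J : isubset c1 J by apply/andP; split; lia.
have G : forall c e, child c x -> J.1 <= e <= J.2 -> c.1 <= e <= c.2 -> isubset c J.
  move=> c e cc he hce.
  have [[_ sc _ _] [vc _]] := child_valid cc.
  have [m1 m2] := nov hP sc cJ.
  case: (children_disj hP cc1 cc) => [<-//|hd].
  move: hc1J; rewrite /isubset => hc1J.
  apply/andP; split; lia.
pose D' := [seq z <- children n P x | isubset z J].
have [c2 [cc2 hc2]] : exists c, child c x /\ c.1 <= J.2 <= c.2.
  by apply: (child_point hP sx hx); apply/andP; split; lia.
have c1D : c1 \in D' by rewrite mem_filter hc1J mem_children.
have c2D : c2 \in D'.
  by rewrite mem_filter mem_children cc2 andbT; apply: (G c2 J.2) => //; apply/andP; split.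
have c12 : c1 != c2.
  by apply/eqP=> e; subst c2; move: hc1J; rewrite /isubset; lia.
have [c3 [c3C c3n]] : exists c, c \in children n P x /\ ~~ isubset c J.
  case: (ltnP x.1 J.1) => h.
    have [c [cc hc]] : exists c, child c x /\ c.1 <= x.1 <= c.2.
      by apply: (child_point hP sx hx); rewrite leqnn ltnW.
    by exists c; rewrite mem_children cc /isubset; split=> //; apply/negP; clear -h hc; lia.
  have [c [cc hc]] : exists c, child c x /\ c.1 <= x.2 <= c.2.
    by apply: (child_point hP sx hx); rewrite leqnn ltnW.
  by exists c; rewrite mem_children cc /isubset; split=> //; apply/negP; clear -h hc p1 p2 p3; lia.
have hU : union_set D' =i iset J.
  move=> e; rewrite mem_iset; apply/mem_union/idP.
    case=> [[y1 y2]]; rewrite mem_filter /isubset mem_iset => /andP[hy _] he.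
    by move: hy he => /= hy he; clear -hy he; lia.
  move=> he.
  have [c [cc hc]] : exists c, child c x /\ c.1 <= e <= c.2.
    by apply: (child_point hP sx hx); apply/andP; split; clear -he p1 p2; lia.
  exists c; first by rewrite mem_filter mem_children cc andbT; apply: (G c e).
  by rewrite mem_iset.
have := hPn D' (filter_subseq _ _).
rewrite (cs_eqi hP hU) -/(Defs.common P J) cJ => h.
suff : ~~ true by [].
by apply: h; rewrite (two_size c1D c2D c12) /=; exact: filter_lt c3C c3n.
Qed.

Lemma bnL b y J : 0 < b -> strong y -> ~~ bsmall b y -> bnested P b J -> isubset y J ->
  bnested P b y.
Proof.
move=> hb sy; rewrite /bsmall -ltnNge => hy bJ; rewrite /isize in hy; elim: J / bJ.
  move=> I cI sI; have [v1 [v2 v3]] := validI hP (strong_common sy).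
  have [w1 [w2 w3]] := validI hP cI.
  move: sI; rewrite /isubset /isize => sI /andP[a c]; lia.
move=> I J cI cJ pJI hs bJ IH syI.
have [v1 [v2 v3]] := validI hP (strong_common sy).
have [w1 [w2 w3]] := validI hP cJ.
have [m1 m2] := nov hP sy cJ.
case: (boolP (isubset y J)) => [h|h1]; first exact: IH.
case: (boolP (isubset J y)) => h2.
  case: (boolP (J == y)) => [/eqP <-//|h3].
  apply: (bnested_step (J := J)) => //; first exact: (strong_common sy).
    by rewrite /iproper h2 h3.
  move: syI hs; rewrite /isubset /isize => /andP[a c]; lia.
exfalso; move: h1 h2 syI pJI hs; rewrite /isubset iproperE /isize => h1 h2 /andP[a c] /and3P[d e f].
lia.
Qed.

Lemma bnM b y z J : 0 < b -> strong y -> strong z -> (y.2 < z.1 \/ z.2 < y.1) ->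
  ~~ bsmall b y -> ~~ bsmall b z -> bnested P b J -> isubset y J -> isubset z J -> False.
Proof.
move=> hb sy sz hd; rewrite /bsmall -!ltnNge => hy hz bJ; rewrite /isize in hy hz; elim: J / bJ.
  move=> I cI sI; have [v1 [v2 v3]] := validI hP (strong_common sy).
  move: sI; rewrite /isubset /isize => sI /andP[a c]; lia.
move=> I J cI cJ pJI hs bJ IH syI szI.
have [v1 [v2 v3]] := validI hP (strong_common sy).
have [u1 [u2 u3]] := validI hP (strong_common sz).
have [w1 [w2 w3]] := validI hP cJ.
have [m1 m2] := nov hP sy cJ.
have [k1 k2] := nov hP sz cJ.
move: syI szI pJI hs; rewrite /isubset iproperE /isize => /andP[a c] /andP[a' c'] /and3P[d e f] hs.
apply: IH; apply/andP; split; lia.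
Qed.

End C.
Set Implicit Arguments. Unset Strict Implicit.

Section D.
Variables (n : nat) (P : seq (seq nat)).
Hypothesis hP : good n P.

Notation common := (Defs.common P).
Notation strong := (Defs.strong n P).
Notation child := (Defs.child n P).

Lemma inD_basic I y : common I -> inD n P I y ->
  [/\ strong y, iproper y I & forall w, strong w -> iproper y w -> isubset I w].
Proof.
move=> cI; rewrite /inD; case: ifP => sI.
  by move=> cy; have [sx sy pyx h] := child_prop hP cy; split.
case=> x [qx cy syI hU].
have [[sx sy pyx h] [vy vx]] := child_valid hP cy.
have hIx : isubset I x.
  have [i1 [i2 i3]] := validI hP cI.
  have : I.1 \in iset I by rewrite mem_iset leqnn.
  have : I.2 \in iset I by rewrite mem_iset leqnn andbT.
  rewrite -!hU => /mem_union [c1 + h1] /mem_union [c2 + h2].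
  rewrite !mem_filter => /and3P[_ cc1 _] /and3P[_ cc2 _].
  have [[_ _ p1 _] _] := child_valid hP cc1.
  have [[_ _ p2 _] _] := child_valid hP cc2.
  move: p1 p2 h1 h2; rewrite !iproperE !mem_iset /isubset => /and3P[a b _] /and3P[c d _] e f.
  apply/andP; split; clear -a b c d e f; lia.
split=> //.
  rewrite /iproper syI /=; apply/eqP=> e; move: sI; rewrite -e sy //.
move=> w sw pyw; have := h w sw pyw; move: hIx; rewrite /isubset => /andP[a b] /andP[c d].
apply/andP; split; clear -a b c d; lia.
Qed.

Lemma inD_disj I y z : common I -> inD n P I y -> inD n P I z ->
  y = z \/ y.2 < z.1 \/ z.2 < y.1.
Proof.
move=> cI iy iz.
case: (inD_basic cI iy) => sy pyI hy.
case: (inD_basic cI iz) => sz pzI hz.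
have [n1 n2] := nov hP sy (strong_common sz).
have vy := validI hP (strong_common sy).
have vz := validI hP (strong_common sz).
case: (boolP (iproper y z)) => pyz.
  have := hy z sz pyz; move: pzI; rewrite iproperE /isubset => /and3P[a b c] /andP[d e].
  exfalso; clear -a b c d e; lia.
case: (boolP (iproper z y)) => pzy.
  have := hz y sy pzy; move: pyI; rewrite iproperE /isubset => /and3P[a b c] /andP[d e].
  exfalso; clear -a b c d e; lia.
move: pyz pzy; rewrite !iproperE => a b.
case: (boolP ((y.1 == z.1) && (y.2 == z.2))) => [/andP[/eqP e1 /eqP e2]|ne].
  by left; apply: pairE.
right; clear -a b ne n1 n2 vy vz; lia.
Qed.

Lemma Mx_disj I y z : Mx n P I y -> Mx n P I z -> y = z \/ y.2 < z.1 \/ z.2 < y.1.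
Proof.
case=> sy pyI hy [sz pzI hz].
have [n1 n2] := nov hP sy (strong_common sz).
have vy := validI hP (strong_common sy).
have vz := validI hP (strong_common sz).
case: (boolP (iproper y z)) => pyz; first by case: (hy z sz pyz pzI).
case: (boolP (iproper z y)) => pzy; first by case: (hz y sy pzy pyI).
move: pyz pzy; rewrite !iproperE => a b.
case: (boolP ((y.1 == z.1) && (y.2 == z.2))) => [/andP[/eqP e1 /eqP e2]|ne].
  by left; apply: pairE.
right; clear -a b ne n1 n2 vy vz; lia.
Qed.

Lemma Mx_cover I e : common I -> I.1 < I.2 -> I.1 <= e <= I.2 ->
  exists y, Mx n P I y /\ y.1 <= e <= y.2.
Proof.
move=> cI hI he.
have [i1 [i2 i3]] := validI hP cI.
have se : strong (e, e) by apply: (single_strong hP); clear -he i1 i3; lia.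
have h1 : isubset (e, e) I by rewrite /isubset.
have h2 : (e, e) != I by apply/eqP=> E; move: hI; rewrite -E /= ltnn.
case: (maxstrong hP se h1 h2 i3) => z [hz mz]; by exists z.
Qed.

End D.
Set Implicit Arguments. Unset Strict Implicit.

Section E.
Variables (n : nat) (P : seq (seq nat)).
Hypothesis hP : good n P.

Notation common := (Defs.common P).
Notation strong := (Defs.strong n P).
Notation child := (Defs.child n P).

Lemma nest3 y z e : strong y -> strong z -> y.1 <= e <= y.2 -> z.1 <= e <= z.2 ->
  [\/ iproper y z, iproper z y | y = z].
Proof.
move=> sy sz hy hz.
have [n1 n2] := nov hP sy (strong_common sz).
case: (boolP ((y.1 == z.1) && (y.2 == z.2))) => [/andP[/eqP e1 /eqP e2]|ne].
  by apply: Or33; apply: pairE.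
case: (boolP (isubset y z)) => h.
  by apply: Or31; move: h; rewrite iproperE /isubset => /andP[a b]; apply/and3P; split=> //; clear -ne; lia.
apply: Or32; move: h; rewrite iproperE /isubset => h; apply/and3P; split; clear -h hy hz n1 n2 ne; lia.
Qed.

Lemma Mx_inD I y : common I -> I.1 < I.2 -> Mx n P I y -> inD n P I y.
Proof.
move=> cI hI My; rewrite /inD; case: ifP => sI.
  exact: (child_of_max hP sI My).
have [i1 [i2 i3]] := validI hP cI.
pose Q m := has (fun z => strong z && isubset I z && (isize z == m)) (all_intervals n).
have hex : exists m, Q m.
  exists (isize (1, n)); apply/hasP; exists (1, n).
    exact: (common_all hP (strong_common (root_strong hP))).
  rewrite (root_strong hP) /isubset /=; apply/andP; split; first by apply/andP; split. exact/eqP.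
case: (ex_minnP hex) => m /hasP[[x1 x2] xin /andP[/andP[sx hIx] /eqP ex]] mmin.
set x : interval := (x1, x2) in sx hIx ex.
have hmin : forall w, strong w -> isubset I w -> isize x <= isize w.
  move=> w sw hw; rewrite ex; apply: mmin; apply/hasP; exists w; last by rewrite sw hw eqxx.
  exact: (common_all hP (strong_common sw)).
have [v1 [v2 v3]] := validI hP (strong_common sx).
have hIne : I != x by apply/eqP=> E; move: sI; rewrite E sx.
have hIxp : iproper I x by rewrite /iproper hIx hIne.
have hx : x.1 < x.2 by move: hIxp; rewrite iproperE => /and3P[a b c]; clear -a b c hI; lia.
have cover : forall e, I.1 <= e <= I.2 ->
    exists c, [/\ child c x, c.1 <= e <= c.2 & isubset c I].
  move=> e he.
  have [c [cc hc]] : exists c, child c x /\ c.1 <= e <= c.2.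
    by apply: (child_point hP sx hx); move: hIx; rewrite /isubset => /andP[a b];
       apply/andP; split; clear -a b he; lia.
  exists c; split=> //.
  have [[_ sc pcx _] [vc _]] := child_valid hP cc.
  case: (boolP (isubset I c)) => hIc.
    have := hmin c sc hIc; have := size_lt (proj1 (proj2 vc)) pcx; clear; lia.
  have [m1 m2] := nov hP sc cI.
  move: hIc; rewrite /isubset => hIc; apply/andP; split; clear -hIc m1 m2 hc he vc; lia.
pose D' := [seq z <- children n P x | isubset z I].
have hU : union_set D' =i iset I.
  move=> e; rewrite mem_iset; apply/mem_union/idP.
    case=> [[y1 y2]]; rewrite mem_filter /isubset mem_iset => /andP[hy _] he.
    by move: hy he => /= hy he; clear -hy he; lia.
  move=> he; case: (cover e he) => c [cc hc hcI].
  by exists c; rewrite ?mem_iset // mem_filter hcI (mem_children hP).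
have qx : Qnode n P x.
  split=> // -[_ hPn].
  have [ca [cca hca haI]] := cover I.1 (introT andP (conj (leqnn _) (ltnW hI))).
  have [cb [ccb hcb hbI]] : exists c, [/\ child c x, c.1 <= I.2 <= c.2 & isubset c I].
    by apply: cover; rewrite leqnn andbT; apply: ltnW.
  have caD : ca \in D' by rewrite mem_filter haI (mem_children hP).
  have cbD : cb \in D' by rewrite mem_filter hbI (mem_children hP).
  have cab : ca != cb.
    apply/eqP=> E; subst cb.
    have E : ca = I by apply: pairE; move: haI; rewrite /isubset => /andP[a b]; clear -a b hca hcb; lia.
    have [[_ sca _ _] _] := child_valid hP cca.
    by move: sI; rewrite -E sca.
  have [c3 [c3C c3n]] : exists c, c \in children n P x /\ ~~ isubset c I.
    move: hIxp; rewrite iproperE => /and3P[p1 p2 p3].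
    case: (ltnP x.1 I.1) => h.
      have [c [cc hc]] : exists c, child c x /\ c.1 <= x.1 <= c.2.
        by apply: (child_point hP sx hx); rewrite leqnn ltnW.
      by exists c; rewrite (mem_children hP) cc /isubset; split=> //; apply/negP; clear -h hc; lia.
    have [c [cc hc]] : exists c, child c x /\ c.1 <= x.2 <= c.2.
      by apply: (child_point hP sx hx); rewrite leqnn ltnW.
    by exists c; rewrite (mem_children hP) cc /isubset; split=> //; apply/negP; clear -h hc p1 p2 p3; lia.
  have := hPn D' (filter_subseq _ _).
  rewrite (cs_eqi hP hU) -/(Defs.common P I) cI => h.
  suff : ~~ true by [].
  by apply: h; rewrite (two_size caD cbD cab) /=; exact: filter_lt c3C c3n.
case: My => sy pyI hy.
have [w1 [w2 w3]] := validI hP (strong_common sy).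
have syI : isubset y I by case/andP: pyI.
exists x; split=> //.
have [c [cc hc hcI]] : exists c, [/\ child c x, c.1 <= y.1 <= c.2 & isubset c I].
  by apply: cover; move: syI; rewrite /isubset => /andP[a b]; apply/andP; split; clear -a b w2; lia.
have [[_ sc pcx hcp] [vc _]] := child_valid hP cc.
have hyy : y.1 <= y.1 <= y.2 by rewrite leqnn w2.
case: (nest3 sc sy hc hyy) => [pcy|pyc|<-//].
  have := hcp y sy pcy; move: syI hIxp; rewrite /isubset iproperE => /andP[a b] /and3P[c0 d e] /andP[f g].
  exfalso; clear -a b c0 d e f g; lia.
have pcI : iproper c I.
  rewrite /iproper hcI /=; apply/eqP=> E; move: sI; rewrite -E sc //.
by case: (hy c sc pyc pcI).
Qed.

End E.
Set Implicit Arguments. Unset Strict Implicit.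

Section F.
Variables (n : nat) (P : seq (seq nat)).
Hypothesis hP : good n P.

Notation common := (Defs.common P).
Notation strong := (Defs.strong n P).
Notation child := (Defs.child n P).

Definition cand (I W : interval) :=
  [/\ common W, iproper W I & forall z, strong z -> isubset W z -> iproper z I -> False].

Definition candb (I W : interval) :=
  [&& common W, iproper W I &
      all (fun z => (strong z && isubset W z) ==> ~~ iproper z I) (all_intervals n)].

Lemma candP I W : candb I W -> cand I W.
Proof.
case/and3P=> cW pW /allP h; split=> // z sz hWz pzI.
have := h z (common_all hP (strong_common sz)); by rewrite sz hWz pzI.
Qed.

Lemma candbP I W : cand I W -> candb I W.
Proof.
case=> cW pW h; rewrite /candb cW pW /=; apply/allP=> z _; apply/implyP=> /andP[sz hWz].
by apply/negP=> pzI; case: (h z sz hWz pzI).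
Qed.

Definition cpair (I : interval) :=
  exists m, [/\ I.1 <= m, m < I.2, common (I.1, m) & common (m.+1, I.2)].

Lemma cand_pair I : strong I -> (exists W, cand I W) -> cpair I.
Proof.
move=> sI [W0 cW0].
have [i1 [i2 i3]] := validI hP (strong_common sI).
pose Q m := has (fun W => candb I W && (isize W == m)) (all_intervals n).
have hex : exists m, Q m.
  exists (isize W0); apply/hasP; exists W0; last by rewrite candbP //= eqxx.
  by case: cW0 => c _ _; exact: (common_all hP c).
have hub : forall m, Q m -> m <= n.
  move=> m /hasP [[w1 w2] win /andP[/candP [cw pw _] /eqP <-]].
  move: pw; rewrite iproperE /isize /= => /and3P[a b c]; clear -a b c i1 i3; lia.
case: (ex_maxnP hex hub) => m /hasP [[w1 w2] win /andP[/candP cW /eqP ew]] mmax.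
case: (cW) => cWc pWI hW.
move: (validI hP cWc) => /= [u1 [u2 u3]].
have nsW : ~~ strong (w1, w2).
  apply/negP=> sW; apply: (hW (w1, w2) sW) => //; by rewrite /isubset !leqnn.
case: (not_strong cWc nsW) => [[k1 k2]] [cK ov].
move: (validI hP cK) => /= [t1 [t2 t3]].
have [n1 n2] := nov hP sI cK.
move: n1 n2 => /= n1 n2.
move: pWI; rewrite iproperE /= => /and3P[p1 p2 p3].
have candV : forall V, common V -> isubset (w1, w2) V -> V != I -> isubset V I ->
    isize (w1, w2) < isize V -> False.
  move=> V cV hWV hVI hVs hsz.
  have cVV : cand I V.
    split=> //; first by rewrite /iproper hVs hVI.
    move=> z sz hVz; apply: (hW z sz).
    move: hWV hVz; rewrite /isubset /= => /andP[a b] /andP[c d]; apply/andP; split; clear -a b c d; lia.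
  have : Q (isize V).
    apply/hasP; exists V; first exact: (common_all hP cV).
    by rewrite candbP //= eqxx.
  move/mmax; rewrite -ew; clear -hsz; lia.
move: ov; rewrite /overlap /= => /orP[] /andP[/andP[a b] c].
- have [_ _ c3 c4] := common_ov hP cWc cK a b c.
  move: c3 c4 => /= c3 c4.
  case: (boolP ((w1, k2) == I)) => [/eqP E | ne].
    exists w2; rewrite -E /=; split=> //; clear -c; lia.
  exfalso; apply: (candV (w1, k2)) => //.
  + by rewrite /isubset /= leqnn; clear -c; lia.
  + by rewrite /isubset /=; apply/andP; split; clear -p1 p2 a b c n1 n2 u1 u2 t1 t2; lia.
  + by rewrite /isize /=; clear -c u2; lia.
- have [c1 _ _ c4] := common_ov hP cK cWc a b c.
  move: c1 c4 => /= c1 c4.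
  case: (boolP ((k1, w2) == I)) => [/eqP E | ne].
    exists w1.-1; rewrite -E /=; split=> //; try (clear -a b u2; lia).
    by have -> : w1.-1.+1 = w1 by clear -a; lia.
  exfalso; apply: (candV (k1, w2)) => //.
  + by rewrite /isubset /= leqnn andbT; clear -a; lia.
  + by rewrite /isubset /=; apply/andP; split; clear -p1 p2 a b c n1 n2 u1 u2 t1 t2; lia.
  + by rewrite /isize /=; clear -a u2; lia.
Qed.


Lemma uniq_children x : uniq (children n P x).
Proof. exact: filter_uniq (uniq_all n). Qed.

Lemma qnode_cand I (D' : seq interval) : strong I -> subseq D' (children n P I) ->
  1 < size D' < size (children n P I) -> is_common_set P (union_set D') ->
  exists W, cand I W.
Proof.
move=> sI hsub /andP[hs1 hs2] hcom.
have [i1 [i2 i3]] := validI hP (strong_common sI).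
case: (common_set_int hP hcom) => U hU.
have cU : common U by rewrite /Defs.common -(cs_eqi hP hU).
have [v1 [v2 v3]] := validI hP cU.
have uD : uniq D' := subseq_uniq hsub (uniq_children I).
have inD' : forall d, d \in D' -> child d I.
  by move=> d /(mem_subseq hsub); rewrite (mem_children hP).
have [c3 [c3C c3n]] : exists c : interval, c \in children n P I /\ c \notin D'.
  case: (boolP (all (mem D') (children n P I))) => h.
    have := uniq_leq_size (uniq_children I) (fun x hx => allP h x hx).
    by rewrite leqNgt hs2.
  by case/allPn: h => c hc hn; exists c.
have cc3 : child c3 I by rewrite -(mem_children hP).
have inU : forall e : nat, e \in iset U -> exists2 d : interval, d \in D' & d.1 <= e <= d.2.
  by move=> e; rewrite -hU => /mem_union [d hd he]; exists d; rewrite // -mem_iset.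
have hUI : isubset U I.
  have hU1 : U.1 \in iset U by rewrite mem_iset leqnn v2.
  have hU2 : U.2 \in iset U by rewrite mem_iset leqnn v2.
  have [d1 hd1 he1] := inU _ hU1.
  have [d2 hd2 he2] := inU _ hU2.
  have [[_ _ p1 _] _] := child_valid hP (inD' _ hd1).
  have [[_ _ p2 _] _] := child_valid hP (inD' _ hd2).
  move: p1 p2; rewrite !iproperE => /and3P[a b _] /and3P[c d _].
  rewrite /isubset; apply/andP; split; clear -a b c d he1 he2; lia.
have [[_ sc3 pc3 _] [vc3 _]] := child_valid hP cc3.
have hUne : U != I.
  apply/eqP=> E.
  have : c3.1 \in iset U.
    by rewrite E mem_iset; move: pc3; rewrite iproperE => /and3P[a b _]; clear -a b vc3; lia.
  case/inU => d hd hed.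
  case: (children_disj hP cc3 (inD' _ hd)) => [E3|hdj].
    by move: c3n; rewrite E3 hd.
  have [_ [vd _]] := child_valid hP (inD' _ hd).
  clear -hdj hed vc3 vd; lia.
case: D' hsub hs1 hs2 hcom hU uD inD' c3n {inU} => [|c1 [|c2 t]] //= hsub hs1 hs2 hcom hU uD inD' c3n.
have c1D : c1 \in [:: c1, c2 & t] by rewrite inE eqxx.
have c2D : c2 \in [:: c1, c2 & t] by rewrite !inE eqxx orbT.
have c12 : c1 != c2 by move: uD => /= /andP[]; rewrite inE negb_or => /andP[].
have cc1 := inD' _ c1D. have cc2 := inD' _ c2D.
have [[_ sc1 pc1 hc1] [vc1 _]] := child_valid hP cc1.
have [[_ sc2 pc2 _] [vc2 _]] := child_valid hP cc2.
have subU : forall c : interval, c \in [:: c1, c2 & t] -> isubset c U.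
  move=> c hc; have [_ [vc _]] := child_valid hP (inD' _ hc).
  have : c.1 \in iset U by rewrite -hU; apply/mem_union; exists c => //; rewrite mem_iset leqnn; case: vc => _ [-> _].
  have : c.2 \in iset U by rewrite -hU; apply/mem_union; exists c => //; rewrite mem_iset leqnn andbT; case: vc => _ [-> _].
  rewrite !mem_iset /isubset => a b; apply/andP; split; clear -a b; lia.
have hd12 : c1.2 < c2.1 \/ c2.2 < c1.1.
  case: (children_disj hP cc1 cc2) => // E.
  by move: c12; rewrite E eqxx.
exists U; split=> //; first by rewrite /iproper hUI hUne.
move=> z sz hUz pzI.
have h1 := subU _ c1D. have h2 := subU _ c2D.
have pc1z : iproper c1 z.
  move: h1 h2 hUz; rewrite iproperE /isubset => /andP[a b] /andP[c d] /andP[e f].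
  apply/and3P; split; clear -a b c d e f hd12 vc1 vc2; lia.
have := hc1 z sz pc1z; move: pzI; rewrite iproperE /isubset => /and3P[a b c] /andP[d e].
clear -a b c d e; lia.
Qed.

Lemma cpairP I : common I -> I.1 < I.2 -> ~ P_interval n P I -> cpair I.
Proof.
move=> cI hI hnP.
have [i1 [i2 i3]] := validI hP cI.
case: (boolP (strong I)) => sI.
  apply: cand_pair => //.
  apply: NNPP => hno; apply: hnP; split=> // D' hsub hsz; apply/negP => hc.
  by apply: hno; apply: (qnode_cand sI hsub hsz hc).
case: (not_strong cI sI) => [[k1 k2]] [cK].
move: I cI hI hnP i1 i2 i3 sI => [a1 a2] cI /= hI hnP i1 i2 i3 sI.
rewrite /overlap /= => /orP[] /andP[/andP[a b] c].
  have [c1 c2 _ _] := common_ov hP cI cK a b c.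
  exists k1.-1; rewrite /=; split; try (clear -a b c; lia).
    by move: c1.
  by have -> : k1.-1.+1 = k1 by clear -a; lia.
have [_ c2 c3 _] := common_ov hP cK cI a b c.
by exists k2; split; try (clear -a b c; lia).
Qed.

End F.
Set Implicit Arguments. Unset Strict Implicit.

Section G2.
Variables (n : nat) (P : seq (seq nat)).
Hypothesis hP : good n P.

Notation common := (Defs.common P).
Notation strong := (Defs.strong n P).

Lemma left_rem (I L : interval) : common I -> cpair P I -> Mx n P I L ->
  L.1 <= I.1 <= L.2 -> common (L.2.+1, I.2).
Proof.
case: I => i1 i2 cI [m /= [hm1 hm2 cA cB]] [sL pLI hL] hLi.
move: (validI hP cI) => /= [v1 [v2 v3]].
pose Qs s := [&& i1 < s, s <= i2 & common (s, i2)].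
have hex : exists s, Qs s by exists m.+1; rewrite /Qs cB andbT; apply/andP; split; clear -hm1 hm2; lia.
case: (ex_minnP hex) => s /and3P[hs1 hs2 cS] smin.
have hsm : s <= m.+1 by apply: smin; rewrite /Qs cB andbT; apply/andP; split; clear -hm1 hm2; lia.
have cF : common (i1, s.-1).
  case: (boolP (s == m.+1)) => [/eqP -> //|hne].
  have h' : s <= m by clear -hsm hne; lia.
  have [c1 _ _ _] := common_ov hP cA cS hs1 h' hm2.
  by move: c1.
have nosuf : forall t, i1 < t -> t < s -> common (t, i2) -> False.
  move=> t h1 h2 ct; have := smin t; rewrite /Qs h1 ct andbT /=.
  have -> : t <= i2 by clear -h2 hs2; lia.
  by move=> /(_ isT); clear -h2; lia.
have sF : strong (i1, s.-1).
  apply/andP; split=> //; apply/allP=> [[k1 k2]] _; apply/negP=> /andP[cK ov].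
  move: (validI hP cK) => /= [t1 [t2 t3]].
  move: ov; rewrite /overlap /= => /orP[] /andP[/andP[a b] c].
  - case: (ltngtP k2 i2) => hk.
    + have [_ _ _ c4] := common_ov hP cK cS (ltac:(simpl; clear -b hs1; lia)) (ltac:(simpl; clear -c; lia)) hk.
      by apply: (nosuf k1) => //; clear -b hs1; lia.
    + have [_ c2 _ _] := common_ov hP cI cK (ltac:(simpl; clear -a; lia)) (ltac:(simpl; clear -b hs2; lia)) hk.
      by apply: (nosuf k1) => //; clear -b hs1; lia.
    + by move: cK; rewrite hk => cK; apply: (nosuf k1) => //; clear -b hs1; lia.
  - have [_ _ c3 _] := common_ov hP cK cI a b (ltac:(simpl; clear -c hs2; lia)).
    by apply: (nosuf k2.+1) => //; clear -b c; lia.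
have hLF : ~~ iproper L (i1, s.-1).
  apply/negP=> h; apply: (hL _ sF h); rewrite iproperE /=; apply/and3P; split; clear -hs1 hs2; lia.
have [n1 n2] := nov hP sL cS.
have [n3 n4] := nov hP sL cF.
move: (validI hP (strong_common sL)) => [w1 [w2 w3]].
move: pLI hLF n1 n2 n3 n4; rewrite !iproperE /= => /and3P[a b c] hLF n1 n2 n3 n4.
have -> : L.2.+1 = s by clear -a b c hLF n1 n2 n3 n4 w1 w2 w3 hLi hs1 hs2; lia.
exact: cS.
Qed.

Lemma right_rem (I R : interval) : common I -> cpair P I -> Mx n P I R ->
  R.1 <= I.2 <= R.2 -> common (I.1, R.1.-1).
Proof.
case: I => i1 i2 cI [m /= [hm1 hm2 cA cB]] [sR pRI hR] hRi.
move: (validI hP cI) => /= [v1 [v2 v3]].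
pose Qa a := [&& i1 <= a, a < i2 & common (i1, a)].
have hex : exists a, Qa a by exists m; rewrite /Qa cA hm1 hm2.
have hub : forall a, Qa a -> a <= i2 by move=> a /and3P[_ h _]; apply: ltnW.
case: (ex_maxnP hex hub) => a /and3P[ha1 ha2 cPa] amax.
have ham : m <= a by apply: amax; rewrite /Qa cA hm1 hm2.
have cG : common (a.+1, i2).
  case: (boolP (m == a)) => [/eqP <- //|hne].
  have h1' : i1 < m.+1 by clear -hm1; lia.
  have h2' : m.+1 <= a by clear -ham hne; lia.
  have [_ _ c3 _] := common_ov hP cPa cB h1' h2' ha2.
  by move: c3.
have nopre : forall t, a < t -> t < i2 -> common (i1, t) -> False.
  move=> t h1 h2 ct; have := amax t; rewrite /Qa h2 ct andbT /=.
  have -> : i1 <= t by clear -h1 ha1; lia.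
  by move=> /(_ isT); clear -h1; lia.
have sG : strong (a.+1, i2).
  apply/andP; split=> //; apply/allP=> [[k1 k2]] _; apply/negP=> /andP[cK ov].
  move: (validI hP cK) => /= [t1 [t2 t3]].
  move: ov; rewrite /overlap /= => /orP[] /andP[/andP[x y] z].
  - have [c1 _ _ _] := common_ov hP cI cK (ltac:(simpl; clear -x ha1; lia)) y z.
    by apply: (nopre k1.-1) => //; clear -x z y; lia.
  - case: (ltngtP k1 i1) => hk.
    + have [_ c2 _ _] := common_ov hP cK cI hk (ltac:(simpl; clear -y ha1; lia)) z.
      by apply: (nopre k2) => //; clear -y; lia.
    + have [_ _ _ c4] := common_ov hP cPa cK hk (ltac:(simpl; clear -x; lia)) (ltac:(simpl; clear -y; lia)).
      by apply: (nopre k2) => //; clear -y; lia.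
    + by move: cK; rewrite hk => cK; apply: (nopre k2) => //; clear -y; lia.
have hRG : ~~ iproper R (a.+1, i2).
  apply/negP=> h; apply: (hR _ sG h); rewrite iproperE /=; apply/and3P; split; clear -ha1 ha2; lia.
have [n1 n2] := nov hP sR cPa.
have [n3 n4] := nov hP sR cG.
move: (validI hP (strong_common sR)) => [w1 [w2 w3]].
move: pRI hRG n1 n2 n3 n4; rewrite !iproperE /= => /and3P[b1 b2 b3] hRG n1 n2 n3 n4.
have -> : R.1.-1 = a by clear -b1 b2 b3 hRG n1 n2 n3 n4 w1 w2 w3 hRi ha1 ha2; lia.
exact: cPa.
Qed.

End G2.
Set Implicit Arguments. Unset Strict Implicit.

Section H.
Variables (n : nat) (P : seq (seq nat)) (b : nat).
Hypothesis hP : good n P.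
Hypothesis hb : 0 < b.

Notation common := (Defs.common P).
Notation strong := (Defs.strong n P).

Lemma smallbn I : common I -> isize I <= b.+1 -> bnested P b I.
Proof.
move=> cI hs.
move: (validI hP cI) => [v1 [v2 v3]].
case: (boolP (isize I == 1)) => [/eqP h1|h1]; first exact: bnested_single.
have sJ : strong (I.1, I.1) by apply: (single_strong hP); clear -v1 v2 v3; lia.
apply: (bnested_step (J := (I.1, I.1))) => //.
- exact: (strong_common sJ).
- rewrite iproperE /=; move: h1; rewrite /isize => h1; apply/and3P; split; clear -h1 v2; lia.
- by move: hs h1; rewrite /isize /= => hs h1; clear -hs h1 v2; lia.
- by apply: bnested_single; [exact: (strong_common sJ)| rewrite /isize /=; lia].
Qed.

Lemma BI k : forall I, isize I <= k -> common I -> ~ P_interval n P I ->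
  (forall y, Mx n P I y -> ~~ bsmall b y -> bnested P b y) ->
  (forall y z, Mx n P I y -> Mx n P I z -> ~~ bsmall b y -> ~~ bsmall b z -> y = z) ->
  bnested P b I.
Proof.
elim: k => [|k IH] I hk cI hnP hbig huniq.
  move: (validI hP cI) hk => [v1 [v2 v3]]; rewrite /isize; clear -v2; lia.
case: (leqP (isize I) b.+1) => hs; first exact: smallbn.
move: (validI hP cI) => [v1 [v2 v3]].
have hI : I.1 < I.2 by move: hs; rewrite /isize; clear -hb; lia.
have cp := cpairP hP cI hI hnP.
have [L [ML hL]] := Mx_cover hP cI hI (introT andP (conj (leqnn _) (ltnW hI))).
have [R [MR hR]] := Mx_cover hP cI hI (introT andP (conj (ltnW hI) (leqnn _))).
have hLR : L != R.
  apply/eqP=> E; subst R; case: ML => _ + _; rewrite iproperE => /and3P[a c d].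
  clear -a c d hL hR; lia.
have hsm : bsmall b L || bsmall b R.
  case: (boolP (bsmall b L)) => // a; case: (boolP (bsmall b R)) => // c; by move: hLR; rewrite (huniq L R ML MR a c) eqxx.
case: (ML) => sL pLI hLm.
case: (MR) => sR pRI hRm.
move: (validI hP (strong_common sL)) => [l1 [l2 l3]].
move: (validI hP (strong_common sR)) => [r1 [r2 r3]].
case/orP: hsm => hsmall.
- have cJ := left_rem hP cI cp ML hL.
  set J : interval := (L.2.+1, I.2) in cJ.
  move: pLI; rewrite iproperE => /and3P[pa pb pc].
  have pJI : iproper J I.
    rewrite iproperE /=; apply/and3P; split; clear -pa pb pc hL; lia.
  have hsz : isize I <= isize J + b.
    by move: hsmall; rewrite /bsmall /isize /=; clear -pa pb pc hL; lia.
  apply: (bnested_step (J := J)) => //.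
  case: (boolP (strong J)) => sJ.
    have MJ : Mx n P I J.
      split=> // w sw pJw pwI.
      have [n1 n2] := nov hP sw (strong_common sL).
      move: (validI hP (strong_common sw)) => [u1 [u2 u3]].
      case: (boolP (iproper L w)) => hLw; first exact: (hLm w sw hLw pwI).
      move: pJw pwI hLw; rewrite !iproperE /= => /and3P[a c d] /and3P[e f g] hLw.
      clear -a c d e f g hLw n1 n2 u1 u2 pa pb pc hL; lia.
    case: (boolP (bsmall b J)) => hJ.
      apply: smallbn => //; move: hJ; rewrite /bsmall; clear; lia.
    exact: hbig.
have MxJI : forall y, Mx n P J y -> Mx n P I y.
    move=> y [sy pyJ hy]; split=> //.
      move: pyJ; rewrite !iproperE /= => /and3P[a c d]; apply/and3P; split; clear -a c d pa pb pc hL; lia.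
    move=> w sw pyw pwI.
    have [n1 n2] := nov hP sw (strong_common sL).
    move: (validI hP (strong_common sw)) => [u1 [u2 u3]].
    move: (validI hP (strong_common sy)) => [y1 [y2 y3]].
    case: (boolP (iproper L w)) => hLw; first exact: (hLm w sw hLw pwI).
    case: (boolP (w == J)) => [/eqP E | hwJ]; first by move: sJ; rewrite -E sw.
    apply: (hy w sw pyw); rewrite /iproper hwJ andbT /isubset /=.
    move: pyJ pyw pwI hLw; rewrite !iproperE /= => /and3P[a c d] /and3P[e f g] /and3P[h i j] hLw.
    apply/andP; split; clear -a c d e f g h i j hLw n1 n2 u1 u2 y2 pa pb pc hL; lia.
  apply: (IH J) => //.
  - move: hk pJI; rewrite iproperE /isize /= => hk /and3P[a c d]; clear -hk a c d pa pb pc hL; lia.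
  - by move=> [hsJ _]; rewrite hsJ in sJ.
  - move=> y My; exact: hbig (MxJI y My).
  - move=> y z My Mz; exact: huniq (MxJI y My) (MxJI z Mz).
- have cJ := right_rem hP cI cp MR hR.
  set J : interval := (I.1, R.1.-1) in cJ.
  move: pRI; rewrite iproperE => /and3P[pa pb pc].
  have pJI : iproper J I.
    rewrite iproperE /=; apply/and3P; split; clear -pa pb pc hR; lia.
  have hsz : isize I <= isize J + b.
    by move: hsmall; rewrite /bsmall /isize /=; clear -pa pb pc hR r2; lia.
  apply: (bnested_step (J := J)) => //.
  case: (boolP (strong J)) => sJ.
    have MJ : Mx n P I J.
      split=> // w sw pJw pwI.
      have [n1 n2] := nov hP sw (strong_common sR).
      move: (validI hP (strong_common sw)) => [u1 [u2 u3]].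
      case: (boolP (iproper R w)) => hRw; first exact: (hRm w sw hRw pwI).
      move: pJw pwI hRw; rewrite !iproperE /= => /and3P[a c d] /and3P[e f g] hRw.
      clear -a c d e f g hRw n1 n2 u1 u2 pa pb pc hR r2; lia.
    case: (boolP (bsmall b J)) => hJ.
      apply: smallbn => //; move: hJ; rewrite /bsmall; clear; lia.
    exact: hbig.
have MxJI : forall y, Mx n P J y -> Mx n P I y.
    move=> y [sy pyJ hy]; split=> //.
      move: pyJ; rewrite !iproperE /= => /and3P[a c d]; apply/and3P; split; clear -a c d pa pb pc hR r2; lia.
    move=> w sw pyw pwI.
    have [n1 n2] := nov hP sw (strong_common sR).
    move: (validI hP (strong_common sw)) => [u1 [u2 u3]].
    move: (validI hP (strong_common sy)) => [y1 [y2 y3]].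
    case: (boolP (iproper R w)) => hRw; first exact: (hRm w sw hRw pwI).
    case: (boolP (w == J)) => [/eqP E | hwJ]; first by move: sJ; rewrite -E sw.
    apply: (hy w sw pyw); rewrite /iproper hwJ andbT /isubset /=.
    move: pyJ pyw pwI hRw; rewrite !iproperE /= => /and3P[a c d] /and3P[e f g] /and3P[h i j] hRw.
    apply/andP; split; clear -a c d e f g h i j hRw n1 n2 u1 u2 y2 pa pb pc hR r2; lia.
  apply: (IH J) => //.
  - move: hk pJI; rewrite iproperE /isize /= => hk /and3P[a c d]; clear -hk a c d pa pb pc hR r2; lia.
  - by move=> [hsJ _]; rewrite hsJ in sJ.
  - move=> y My; exact: hbig (MxJI y My).
  - move=> y z My Mz; exact: huniq (MxJI y My) (MxJI z Mz).
Qed.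

End H.
Set Implicit Arguments. Unset Strict Implicit.

Unset Implicit Arguments.
Theorem theorem3 (n K : nat) (P : seq (seq nat)) (b : nat) (I : interval) :
  1 <= n -> 1 <= K -> size P = K ->
  all (fun p => perm_eq p (iota 1 n)) P -> head [::] P = iota 1 n ->
  0 < b -> common P I -> 2 <= isize I ->
  bnested P b I <->
  ((P_interval n P I /\
    exists xh, [/\ inD n P I xh, bnested P b xh & isize I <= isize xh + b]) \/
   (Q_interval n P I /\
    (forall y z, inD n P I y -> inD n P I z -> ~~ bsmall b y -> ~~ bsmall b z -> y = z) /\
    (forall y, inD n P I y -> ~~ bsmall b y -> bnested P b y))).
Proof.
move=> hn hK hsz hall hhead hb cI hI2.
have hP : good n P.
  split=> //; apply/eqP=> E; move: hsz; rewrite E /= => hK0; move: hK; rewrite -hK0.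
  by [].
move: (validI hP cI) => [v1 [v2 v3]].
have hI : I.1 < I.2 by move: hI2; rewrite /isize; clear; lia.
split.
- move=> bI.
  case: (classic (P_interval n P I)) => hPI.
  + left; split=> //.
    move: hPI cI hI2 hI v1 v2 v3; case: I / bI.
      by move=> I0 _ h1 _ _ h2; rewrite h1 in h2.
    move=> I0 J cI0 cJ pJI hs bJ hPI _ hI2 hI v1 v2 v3.
    have [xh [cxh hJx]] := Pnode_sub hP hPI cJ pJI.
    have [[_ sxh pxh _] [vx _]] := child_valid hP cxh.
    move: (validI hP cJ) => [j1 [j2 j3]].
    exists xh; split.
    * by rewrite /inD (proj1 hPI).
    * case: (boolP (J == xh)) => [/eqP <- //|hne].
      apply: (bnested_step (J := J)) => //.
      - exact: (strong_common sxh).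
      - by rewrite /iproper hJx hne.
      - move: hs pxh hJx; rewrite iproperE /isize /isubset => hs /and3P[a c d] /andP[e f].
        clear -hs a c d e f j2 vx; lia.
    * move: hs hJx; rewrite /isize /isubset => hs /andP[e f]; clear -hs e f j2; lia.
  + right; split; first by split.
    split.
    * move=> y z iy iz ly lz.
      case: (inD_disj hP cI iy iz) => // hd.
      have [sy pyI _] := inD_basic hP cI iy.
      have [sz pzI _] := inD_basic hP cI iz.
      exfalso; apply: (bnM hP hb sy sz hd ly lz bI); [by case/andP: pyI | by case/andP: pzI].
    * move=> y iy ly.
      have [sy pyI _] := inD_basic hP cI iy.
      apply: (bnL hP hb sy ly bI); by case/andP: pyI.
- case=> [[hPI [xh [ixh bxh hs]]] | [[_ hnP] [hu hbig]]].
  + move: ixh; rewrite /inD (proj1 hPI) => cxh.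
    have [_ sxh pxh _] := child_prop hP cxh.
    apply: (bnested_step (J := xh)) => //; exact: (strong_common sxh).
  + apply: (BI hP hb (k := isize I)) => //.
    * move=> y My; apply: hbig; exact: (Mx_inD hP cI hI My).
    * move=> y z My Mz; apply: hu; exact: (Mx_inD hP cI hI).
Qed.
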